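(* Let $L$ be a finite lattice and $\varphi\in M_1(L)$. For $g\in R(\mathcal L)$ define $$B_\varphi(g)=\min\{\Phi(g):\Phi\in M_\infty(\mathcal L),\ \Pi(\Phi)=\varphi\},\qquad S^\varphi(g)=\max\Big\{\sum_{x\in L}r_x\varphi(x): (r_x)_{x\in L}\in\mathbb R^L,\ \sum_{x\in V}r_x\le g(V)\ \text{for all } V\in\mathcal L\Big\}.$$ Then $B_\varphi(g)=S^\varphi(g)$ for every $g\in R(\mathcal L)$.
   Context: $L$ is a finite lattice. $\mathcal L$ is the set of nonempty up-sets of $L$ (subsets $U$ with $x\in U,\ x\le y\Rightarrow y\in U$), ordered by $U\preceq V$ iff $U\supseteq V$; it is a distributive lattice with meet given by union. $R(\mathcal L)$ denotes real-valued functions on $\mathcal L$. $M_1(L)$ is the set of nonnegative monotone functions on $L$; $M_\infty(\mathcal L)$ is the set of nonnegative completely monotone functions on $(\mathcal L,\preceq)$, where completeness monotonicity means all successive differences $\nabla_{U_1,\dots,U_n}\Phi\ge0$, with $\nabla_U\Phi(W)=\Phi(W)-\Phi(W\wedge U)$ iterated. For $a\in L$, $\langle a\rangle^*=\{x: x\ge a\}$, and $\Pi(\Phi)(x)=\Phi(\langle a\rangle^* )|_{a=x}$, i.e. $\Pi(\Phi)(x)=\Phi(\langle x\rangle^* )$. For $\Phi\in M_\infty(\mathcal L)$ with Möbius inverse $F$ (the unique $F$ with $\Phi(U)=\sum_{V\preceq U}F(V)$, which is nonnegative), $\Phi(g)=\sum_{V\in\mathcal L}F(V)g(V)$. *)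

(* Defs.v *)
From HB Require Import structures.
From mathcomp Require Import all_boot all_order all_algebra.
From mathcomp Require Import reals.
Set Implicit Arguments. Unset Strict Implicit. Unset Printing Implicit Defensive.
Import Order.TTheory GRing.Theory Num.Theory.
Local Open Scope ring_scope.

Section Defs.
Variables (d : Order.disp_t) (T : finLatticeType d) (R : realType).

Definition is_upset (A : {set T}) : bool :=
  [forall x, forall y, (x \in A) && (x <= y)%O ==> (y \in A)].

Definition in_calL (A : {set T}) : bool := is_upset A && (A != set0).

Definition principal_up (a : T) : {set T} := [set x | (a <= x)%O].

(* nabla_U Phi (W) = Phi(W) - Phi(W /\ U), where the meet in (calL, <=) is union *)
Definition nabla (U : {set T}) (Phi : {set T} -> R) : {set T} -> R :=
  fun W => Phi W - Phi (W :|: U).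

Definition nablas (s : seq {set T}) (Phi : {set T} -> R) : {set T} -> R :=
  foldr nabla Phi s.

(* M_infty(calL): nonnegative (case s = [::]) and completely monotone *)
Definition M_infty (Phi : {set T} -> R) : Prop :=
  forall (s : seq {set T}) (W : {set T}),
    all in_calL s -> in_calL W -> 0 <= nablas s Phi W.

Definition M_1 (phi : T -> R) : Prop :=
  (forall x, 0 <= phi x) /\ (forall x y, (x <= y)%O -> phi x <= phi y).

Definition Pi (Phi : {set T} -> R) : T -> R := fun x => Phi (principal_up x).

(* Moebius inverse on (calL, <=) with V <= U iff V \supseteq U:
   F(U) = Phi(U) - sum_{V in calL, V proper superset of U} F(V);
   computed by recursion with fuel (fuel #|T| suffices). *)
Fixpoint mob_fuel (n : nat) (Phi : {set T} -> R) (U : {set T}) : R :=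
  match n with
  | 0 => Phi U
  | n'.+1 => Phi U - \sum_(V : {set T} | in_calL V && (U \proper V)) mob_fuel n' Phi V
  end.

Definition mobius (Phi : {set T} -> R) (U : {set T}) : R := mob_fuel #|T| Phi U.

Definition Phi_app (Phi : {set T} -> R) (g : {set T} -> R) : R :=
  \sum_(V : {set T} | in_calL V) mobius Phi V * g V.

Definition B_feasible (phi : T -> R) (Phi : {set T} -> R) : Prop :=
  M_infty Phi /\ (forall x, Pi Phi x = phi x).

Definition S_feasible (g : {set T} -> R) (r : T -> R) : Prop :=
  forall V, in_calL V -> \sum_(x in V) r x <= g V.

Definition S_obj (phi : T -> R) (r : T -> R) : R := \sum_(x : T) r x * phi x.

End Defs.

(* Main.v *)
Require Import Defs.
From HB Require Import structures.
From mathcomp Require Import all_boot all_order all_algebra.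
From mathcomp Require Import reals.
From mathcomp Require Import ring lra zify.
Set Implicit Arguments. Unset Strict Implicit. Unset Printing Implicit Defensive.
Import Order.TTheory GRing.Theory Num.Theory.
Local Open Scope ring_scope.

Section Farkas.
Variable R : realFieldType.
Variable X : finType.

Definition cstr := ((X -> R) * R)%type.

Inductive cone (I : finType) (c : I -> cstr) : cstr -> Prop :=
| cone_in i : cone c (c i)
| cone_zero : cone c ((fun _ => 0), 0)
| cone_add a1 b1 a2 b2 : cone c (a1,b1) -> cone c (a2,b2) ->
    cone c ((fun j => a1 j + a2 j), b1 + b2)
| cone_scale k a b : 0 <= k -> cone c (a,b) -> cone c ((fun j => k * a j), k * b).

Lemma cone_in' (I : finType) (c : I -> cstr) i : cone c ((c i).1, (c i).2).
Proof. rewrite -surjective_pairing; exact: cone_in. Qed.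

Lemma cone_trans (I I' : finType) (c : I -> cstr) (c' : I' -> cstr) :
  (forall i, cone c (c' i)) -> forall v, cone c' v -> cone c v.
Proof.
move=> H v; elim=> //.
- by move=> *; exact: cone_zero.
- by move=> *; apply: cone_add.
- by move=> *; apply: cone_scale.
Qed.

Lemma cone_coef0 (I : finType) (c : I -> cstr) j :
  (forall i, (c i).1 j = 0) -> forall v, cone c v -> v.1 j = 0.
Proof.
move=> H v; elim=> //=.
- by move=> a1 b1 a2 b2 _ -> _ ->; rewrite addr0.
- by move=> k a b _ _ ->; rewrite mulr0.
Qed.

Lemma cone_mult (I : finType) (c : I -> cstr) v : cone c v ->
  exists l : I -> R, (forall i, 0 <= l i) /\
    (forall j, v.1 j = \sum_i l i * (c i).1 j) /\ v.2 = \sum_i l i * (c i).2.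
Proof.
elim.
- move=> i; exists (fun k => if k == i then 1 else 0); split.
    by move=> k; case: (k == i).
  have E : forall f : I -> R, f i = \sum_k (if k == i then 1 else 0) * f k.
    move=> f; rewrite (bigD1 i) //= eqxx mul1r big1 ?addr0 //.
    by move=> k /negbTE ->; rewrite mul0r.
  by split; [move=> j|]; apply: E.
- exists (fun _ => 0); split => //; split => [j|] /=;
  by rewrite big1 // => k _; rewrite mul0r.
- move=> a1 b1 a2 b2 _ [l1 [h1 [e1 f1]]] _ [l2 [h2 [e2 f2]]]; simpl in *.
  exists (fun k => l1 k + l2 k); split; first by move=> k; rewrite addr_ge0.
  split => [j|] /=.
    by rewrite e1 e2 -big_split /=; apply: eq_bigr => k _; rewrite mulrDl.
  by rewrite f1 f2 -big_split /=; apply: eq_bigr => k _; rewrite mulrDl.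
- move=> k a b hk _ [l [h [e f]]]; simpl in *.
  exists (fun i => k * l i); split; first by move=> i; rewrite mulr_ge0.
  split => [j|] /=.
    by rewrite e big_distrr /=; apply: eq_bigr => i _; rewrite mulrA.
  by rewrite f big_distrr /=; apply: eq_bigr => i _; rewrite mulrA.
Qed.

Definition feas (I : finType) (c : I -> cstr) (D : {set X}) :=
  exists z : X -> R, forall i, \sum_(j in D) (c i).1 j * z j <= (c i).2.

Definition fm_c (I : finType) (c : I -> cstr) (x0 : X) :
  (I * I + I)%type -> cstr :=
  fun k => match k with
  | inl (i, i') => if (0 < (c i).1 x0) && ((c i').1 x0 < 0) then
       ((fun j => - (c i').1 x0 * (c i).1 j + (c i).1 x0 * (c i').1 j),
         - (c i').1 x0 * (c i).2 + (c i).1 x0 * (c i').2)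
       else ((fun _ => 0), 0)
  | inr i => if (c i).1 x0 == 0 then c i else ((fun _ => 0), 0)
  end.

Lemma fm_cone (I : finType) (c : I -> cstr) x0 k : cone c (fm_c c x0 k).
Proof.
case: k => [[i i']|i] /=.
  case: ifP => [/andP[h1 h2]|_]; last exact: cone_zero.
  apply: cone_add; apply: cone_scale; try exact: cone_in'.
    by rewrite oppr_ge0 ltW.
  exact: ltW.
by case: ifP => _; [exact: cone_in | exact: cone_zero].
Qed.

Lemma fm_coef0 (I : finType) (c : I -> cstr) x0 k : (fm_c c x0 k).1 x0 = 0.
Proof.
case: k => [[i i']|i] /=.
  by case: ifP => _ //=; rewrite mulNr mulrC addNr.
by case: ifP => [/eqP|].
Qed.

Lemma sep_lem (ls us : seq R) :
  (forall l u, l \in ls -> u \in us -> l <= u) ->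
  exists t, (forall l, l \in ls -> l <= t) /\ (forall u, u \in us -> t <= u).
Proof.
elim: ls => [|l ls IH] H.
  suff [t Ht] : exists t, forall u, u \in us -> t <= u by exists t.
  elim: us {H} => [|u us [t Ht]]; first by exists 0.
  exists (if t <= u then t else u) => v; rewrite inE => /orP[/eqP->|/Ht hv].
    by case: ifP => // /negbT; rewrite -ltNge => /ltW.
  by case: ifP => // /negbT; rewrite -ltNge => /ltW h; apply: le_trans hv.
have [t [h1 h2]] : exists t, (forall l, l \in ls -> l <= t) /\ (forall u, u \in us -> t <= u).
  by apply: IH => l' u h h'; apply: H => //; rewrite inE h orbT.
exists (if l <= t then t else l); split.
  move=> l'; rewrite inE => /orP[/eqP->|/h1 h].
    by case: ifP => // /negbT; rewrite -ltNge => /ltW.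
  by case: ifP => // /negbT; rewrite -ltNge => /ltW h'; apply: le_trans h'.
move=> u hu; case: ifP => _; first exact: h2.
by apply: H => //; rewrite inE eqxx.
Qed.

Lemma sum_lin (D : {set X}) (a1 a2 : X -> R) (u v : R) (z : X -> R) :
  \sum_(j in D) (u * a1 j + v * a2 j) * z j =
  u * \sum_(j in D) a1 j * z j + v * \sum_(j in D) a2 j * z j.
Proof.
rewrite !big_distrr -big_split /=; apply: eq_bigr => j _.
by rewrite mulrDl !mulrA.
Qed.

Lemma fm_lift (I : finType) (c : I -> cstr) x0 (D : {set X}) :
  x0 \in D -> feas (fm_c c x0) (D :\ x0) -> feas c D.
Proof.
move=> hx0 [z hz].
pose s i := \sum_(j in D :\ x0) (c i).1 j * z j.
pose p i := (c i).1 x0.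
pose L i := ((c i).2 - s i) / p i.
pose ls := [seq L i | i <- enum I & p i < 0].
pose us := [seq L i | i <- enum I & 0 < p i].
have [t [ht1 ht2]] : exists t, (forall l, l \in ls -> l <= t) /\ (forall u, u \in us -> t <= u).
  apply: sep_lem => l u /mapP[i]; rewrite mem_filter => /andP[hi _] -> /mapP[k].
  rewrite mem_filter => /andP[hk _] ->.
  have := hz (inl (k, i)); rewrite /= hk hi /= sum_lin -/(s k) -/(s i).
  rewrite /L => hh.
  rewrite ler_pdivlMr // mulrAC ler_ndivrMr //.
  rewrite -/(p k) -/(p i) in hh.
  have -> : ((c k).2 - s k) * p i = - (p i) * (s k) + p k * s i - p k * s i - (- p i) * (c k).2  by ring.
  rewrite -subr_ge0.
  have : 0 <= - p i * (c k).2 + p k * (c i).2 - (- p i * s k + p k * s i) by rewrite subr_ge0.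
  move=> hh2; apply: le_trans hh2 _; rewrite le_eqVlt; apply/orP; left; apply/eqP; ring.
exists (fun j => if j == x0 then t else z j) => i.
rewrite (big_setD1 x0 hx0) /= eqxx.
have -> : \sum_(j in D :\ x0) (c i).1 j * (if j == x0 then t else z j) = s i.
  by apply: eq_bigr => j; rewrite in_setD1 => /andP[/negbTE -> _].
have hmem : forall P : pred I, P i -> L i \in [seq L i | i <- enum I & P i].
  by move=> P hP; apply: map_f; rewrite mem_filter hP mem_enum.
case: (ltgtP (p i) 0) => hp.
- have := ht1 _ (hmem (fun i => p i < 0) hp); rewrite /L ler_ndivrMr // => h.
  by rewrite -/(p i) mulrC; rewrite -lerBrDr.
- have := ht2 _ (hmem (fun i => 0 < p i) hp); rewrite /L ler_pdivlMr // => h.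
  by rewrite -/(p i) mulrC; rewrite -lerBrDr.
- move: hp; rewrite /p => hp.
  have := hz (inr i); rewrite /=; case: eqP => [_ h|/(_ hp)//].
  by rewrite hp mul0r add0r.
Qed.

Lemma farkas_n n : forall (D : {set X}), #|D| = n ->
  forall (I : finType) (c : I -> cstr),
  feas c D \/ exists a b, cone c (a, b) /\ (forall j, j \in D -> a j = 0) /\ b < 0.
Proof.
elim: n => [|n IH] D hD I c.
  have -> : D = set0 by apply/eqP; rewrite -cards_eq0 hD.
  case: (boolP [forall i, 0 <= (c i).2]) => [/forallP h|].
    left; exists (fun _ => 0) => i; by rewrite big_set0 h.
  rewrite negb_forall => /existsP[i hi]; right.
  exists (c i).1, (c i).2; split; first exact: cone_in'.
  by split => [j|]; [rewrite inE | rewrite ltNge].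
have : (0 < #|D|)%N by rewrite hD.
rewrite card_gt0 => /set0Pn[x0 hx0].
have hD' : #|D :\ x0| = n.
  by move: hD; rewrite (cardsD1 x0) hx0 add1n => -[].
case: (IH _ hD' _ (fm_c c x0)) => [hf|[a [b [hc [ha hb]]]]].
  by left; apply: fm_lift hx0 hf.
right; exists a, b; split; first exact: cone_trans (fm_cone c x0) _ hc.
split => // j hj; case: (eqVneq j x0) => [->|hne].
  exact: (cone_coef0 (fm_coef0 c x0) hc).
by apply: ha; rewrite in_setD1 hne.
Qed.

End Farkas.

Section Lat.
Variables (d : Order.disp_t) (T : finLatticeType d) (R : realType).

Lemma upsetP (A : {set T}) x y : is_upset A -> x \in A -> (x <= y)%O -> y \in A.
Proof. by move=> /forallP /(_ x) /forallP /(_ y) /implyP h hx hxy; apply: h; rewrite hx hxy. Qed.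

Lemma calLU (A B : {set T}) : in_calL A -> in_calL B -> in_calL (A :|: B).
Proof.
move=> /andP[hA nA] /andP[hB nB]; apply/andP; split.
  apply/forallP => x; apply/forallP => y; apply/implyP => /andP[].
  by rewrite !inE => /orP[h|h] hxy; apply/orP; [left; apply: upsetP hA h hxy | right; apply: upsetP hB h hxy].
case/set0Pn: nA => x hx; apply/set0Pn; exists x; by rewrite inE hx.
Qed.

Lemma calL_up (x : T) : in_calL (principal_up x).
Proof.
apply/andP; split.
  apply/forallP => a; apply/forallP => b; apply/implyP => /andP[].
  by rewrite !inE => h1 h2; apply: le_trans h1 h2.
by apply/set0Pn; exists x; rewrite inE.
Qed.

Lemma up_sub (V : {set T}) x : in_calL V -> (principal_up x \subset V) = (x \in V).
Proof.
move=> /andP[hV _]; apply/idP/idP.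
  by move/subsetP; apply; rewrite inE.
by move=> hx; apply/subsetP => y; rewrite inE => hy; apply: upsetP hV hx hy.
Qed.

Lemma mob_stable (Phi : {set T} -> R) k : forall U : {set T}, (#|T| - #|U| <= k)%N ->
  forall n, (k <= n)%N -> mob_fuel n Phi U = mob_fuel k Phi U.
Proof.
elim: k => [|k IH] U hU n hn.
  have eU : U = setT.
    by apply/eqP; rewrite eqEcard subsetT cardsT /= -subn_eq0 -leqn0.
  case: n hn => [|n] _ //=.
  rewrite big_pred0 ?subr0 //; move=> V /=; rewrite eU.
  by rewrite properE subsetT andbF andbF.
case: n hn => [|n] hn //=; congr (_ - _); apply: eq_bigr => V /andP[_ hp].
apply: IH; last by [].
have := proper_card hp; have := max_card V; lia.
Qed.

Lemma mob_rec (Phi : {set T} -> R) U : in_calL U ->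
  mobius Phi U = Phi U - \sum_(V | in_calL V && (U \proper V)) mobius Phi V.
Proof.
move=> /andP[_ /set0Pn[x hx]].
rewrite /mobius.
have : (0 < #|T|)%N by apply/card_gt0P; exists x.
case eT: #|T| => [//|n] _ /=; congr (_ - _); apply: eq_bigr => V /andP[_ hp].
have h1 := proper_card hp; have h2 := max_card V.
have hU : (0 < #|U|)%N by apply/card_gt0P; exists x.
symmetry; change (mob_fuel n.+1 Phi V = mob_fuel n Phi V).
apply: (@mob_stable Phi n V); lia.
Qed.

Lemma mob_sum (Phi : {set T} -> R) U : in_calL U ->
  Phi U = \sum_(V | in_calL V && (U \subset V)) mobius Phi V.
Proof.
move=> hU; rewrite (bigD1 U) /=; last by rewrite hU subxx.
rewrite mob_rec //.
rewrite (eq_bigl (fun V => in_calL V && (U \proper V))); first by rewrite subrK.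
by move=> V /=; rewrite properEneq [V == U]eq_sym; case: (in_calL V); case: (U \subset V); case: (U == V).
Qed.

Lemma mob_of (Phi F : {set T} -> R) :
  (forall W, in_calL W -> Phi W = \sum_(V | in_calL V && (W \subset V)) F V) ->
  forall U, in_calL U -> mobius Phi U = F U.
Proof.
move=> hPhi.
suff : forall k (U : {set T}), (#|T| - #|U| <= k)%N -> in_calL U -> mobius Phi U = F U.
  by move=> h U; apply: (h #|T|); lia.
elim=> [|k IH] U hk hU; rewrite mob_rec // hPhi // (bigD1 U) /=; try by rewrite hU subxx.
- have -> : \sum_(V | in_calL V && (U \proper V)) mobius Phi V =
            \sum_(V | in_calL V && (U \proper V)) F V.
    apply: eq_bigr => V /andP[_ hp]; exfalso.
    move: hk; rewrite leqn0 subn_eq0 => h3; have := leq_trans (max_card V) h3; by rewrite leqNgt (proper_card hp).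
  rewrite -[X in _ = X]addr0 -addrA; congr (_ + _); apply/eqP; rewrite subr_eq0; apply/eqP.
  by apply: eq_bigl => V /=; rewrite properEneq [V == U]eq_sym; case: (in_calL V); case: (U \subset V); case: (U == V).
- have -> : \sum_(V | in_calL V && (U \proper V)) mobius Phi V =
            \sum_(V | in_calL V && (U \proper V)) F V.
    apply: eq_bigr => V /andP[hV hp]; apply: IH => //.
    have := proper_card hp; have := max_card V; lia.
  rewrite -[X in _ = X]addr0 -addrA; congr (_ + _); apply/eqP; rewrite subr_eq0; apply/eqP.
  by apply: eq_bigl => V /=; rewrite properEneq [V == U]eq_sym; case: (in_calL V); case: (U \subset V); case: (U == V).
Qed.

Lemma nablas_sum (Phi F : {set T} -> R) :
  (forall W, in_calL W -> Phi W = \sum_(V | in_calL V && (W \subset V)) F V) ->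
  forall s W, all (@in_calL _ T) s -> in_calL W ->
  nablas s Phi W = \sum_(V | in_calL V && (W \subset V) && all (fun U : {set T} => ~~ (U \subset V)) s) F V.
Proof.
move=> hPhi; elim=> [|U s IH] W hs hW /=.
  by rewrite hPhi //; apply: eq_bigl => V; rewrite andbT.
move/andP: hs => [hU hs].
rewrite /nabla IH // IH //; last exact: calLU.
rewrite [X in X - _]big_mkcond [X in _ - X]big_mkcond [RHS]big_mkcond -sumrB.
apply: eq_bigr => V _; rewrite subUset.
by case: (in_calL V); case: (W \subset V); case: (U \subset V); case: (all _ s); rewrite /= ?subr0 ?subrr.
Qed.

Lemma mob_ge0 (Phi : {set T} -> R) U : M_infty Phi -> in_calL U -> 0 <= mobius Phi U.
Proof.
move=> hM hU.
pose s := [seq U :|: principal_up y | y <- enum (~: U)].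
have hs : all (@in_calL _ T) s.
  by apply/allP => A /mapP[y _ ->]; apply: calLU => //; apply: calL_up.
have := hM s U hs hU; rewrite (nablas_sum (F := mobius Phi)) //; last first.
  by move=> W hW; apply: mob_sum.
rewrite (eq_bigl (fun V => V == U)) ?big_pred1_eq // => V /=.
apply/idP/eqP => [/andP[/andP[hV hUV] hall]|->]; last first.
  rewrite hU subxx /=; apply/allP => A /mapP[y]; rewrite mem_enum inE => hy ->.
  rewrite subUset negb_and; apply/orP; right; apply/negP => /subsetP /(_ y).
  by rewrite !inE lexx => /(_ isT); apply/negP.
apply/eqP; rewrite eqEsubset hUV andbT; apply/subsetP => y hy.
case: (boolP (y \in U)) => // hyU.
move/allP: hall => /(_ (U :|: principal_up y)); rewrite subUset hUV /= up_sub // hy.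
by move=> h; have := h (map_f _ _) => /=; rewrite ?mem_enum ?inE; apply.
Qed.

Lemma Pi_sum (Phi F : {set T} -> R) x :
  (forall W, in_calL W -> Phi W = \sum_(V | in_calL V && (W \subset V)) F V) ->
  Phi (principal_up x) = \sum_(V | in_calL V && (x \in V)) F V.
Proof.
move=> h; rewrite h ?calL_up //; apply: eq_bigl => V.
by case hV: (in_calL V) => //=; rewrite up_sub.
Qed.

Lemma exch (r : T -> R) (F : {set T} -> R) :
  \sum_x r x * \sum_(V | in_calL V && (x \in V)) F V =
  \sum_(V | in_calL V) F V * \sum_(x in V) r x.
Proof.
under eq_bigr => x _ do rewrite big_distrr big_mkcond /=.
rewrite exchange_big /= [RHS]big_mkcond; apply: eq_bigr => V _.
case: (in_calL V) => /=; last by rewrite big1.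
rewrite big_distrr [RHS]big_mkcond; apply: eq_bigr => x _.
by case: (x \in V); rewrite ?mulr0 // mulrC.
Qed.

Lemma wd (phi : T -> R) (g : {set T} -> R) (F : {set T} -> R) (r : T -> R) :
  (forall V, in_calL V -> 0 <= F V) ->
  (forall x, phi x = \sum_(V | in_calL V && (x \in V)) F V) ->
  (forall V, in_calL V -> \sum_(x in V) r x <= g V) ->
  \sum_x r x * phi x <= \sum_(V | in_calL V) F V * g V.
Proof.
move=> hF hphi hr.
under eq_bigr => x _ do rewrite hphi.
rewrite exch; apply: ler_sum => V hV; apply: ler_wpM2l; [exact: hF | exact: hr].
Qed.

Lemma sum_ifeq (A : {set T}) (m : R) (P : pred {set T}) :
  \sum_(V | P V) (if V == A then m else 0) = if P A then m else 0.
Proof.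
rewrite big_mkcond (bigD1 A) //= eqxx big1 ?addr0.
  by case: (P A).
by move=> V /negbTE ->; case: (P V).
Qed.

Lemma primal_feas (phi : T -> R) : M_1 phi ->
  exists F : {set T} -> R, (forall V, in_calL V -> 0 <= F V) /\
    (forall x, phi x = \sum_(V | in_calL V && (x \in V)) F V).
Proof.
move=> hphi; move: hphi.
suff : forall n (phi : T -> R), M_1 phi -> (#|[set x | (0 < phi x)%R]| <= n)%N ->
  exists F : {set T} -> R, (forall V, in_calL V -> 0 <= F V) /\
    (forall x, phi x = \sum_(V | in_calL V && (x \in V)) F V).
  by move=> h hphi; apply: (h _ phi hphi (leqnn _)).
elim=> [|n IH] {}phi [h0 hmon] hn.
  exists (fun _ => 0); split => // x; rewrite big1 //.
  have : x \notin [set x | 0 < phi x].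
    by move: hn; rewrite leqn0 cards_eq0 => /eqP ->; rewrite inE.
  by rewrite inE -leNgt => h; apply/eqP; rewrite eq_le h h0.
set S := [set x | 0 < phi x].
case: (eqVneq S set0) => [hSn|/set0Pn[x0' hx0']].
  exists (fun _ => 0); split => // x; rewrite big1 //.
  have : x \notin S by rewrite hSn inE.
  by rewrite inE -leNgt => h; apply/eqP; rewrite eq_le h h0.
  case: (arg_minP phi hx0') => x0 hx0 hmin.
  set m := phi x0.
  have hx0S : x0 \in S by exact: hx0.
  have hm : 0 < m by move: hx0S; rewrite /S inE.
  pose phi' x := phi x - (if x \in S then m else 0).
  have hS : in_calL S.
    apply/andP; split; last by apply/set0Pn; exists x0.
    apply/forallP => a; apply/forallP => b; apply/implyP => /andP[].
    by rewrite !inE => ha hab; apply: lt_le_trans ha (hmon _ _ hab).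
  have hphi' : M_1 phi'.
    split.
      move=> x; rewrite /phi'; case: ifP => hx; last by rewrite subr0.
      by rewrite subr_ge0; apply: hmin.
    move=> x y hxy; rewrite /phi'; case: ifP => hx.
      have hy : y \in S by move: hS => /andP[hu _]; apply: upsetP hu hx hxy.
      by rewrite hy lerD2r; apply: hmon.
    case: ifP => hy; last by rewrite !subr0; apply: hmon.
    rewrite subr0; have : phi x = 0.
      by apply/eqP; rewrite eq_le h0 andbT leNgt; move: hx; rewrite inE => ->.
    by move=> ->; rewrite subr_ge0; apply: hmin.
  have hcard : (#|[set x | (0 < phi' x)%R]| <= n)%N.
    have sub : [set x | 0 < phi' x] \subset S :\ x0.
      apply/subsetP => x; rewrite !inE /phi'.
      case: (eqVneq x x0) => [->|hne] /=.
        by rewrite hx0S /m subrr ltxx.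
      move=> h; apply: lt_le_trans h _; rewrite lerBlDr lerDl.
      by case: ifP => _; [exact: ltW | exact: lexx].
    have := subset_leq_card sub; move: hn; rewrite (cardsD1 x0 S) hx0S.
    rewrite add1n ltnS => h1 h2; exact: leq_trans h2 h1.
  have [F [hF1 hF2]] := IH _ hphi' hcard.
  exists (fun V => F V + if V == S then m else 0); split.
    move=> V hV; apply: addr_ge0; first exact: hF1.
    by case: (V == S) => //; apply: ltW.
  move=> x; rewrite big_split /= -hF2 sum_ifeq hS /= /phi'.
  by rewrite subrK.
Qed.

End Lat.

Section Main.
Variables (d : Order.disp_t) (T : finLatticeType d) (R : realType).
Variables (phi : T -> R) (g : {set T} -> R).

Definition Xv := ({set T} + T)%type.
Definition Ix := (({set T} + T) + ((T + {set T}) + unit))%type.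

Definition cs (i : Ix) : cstr R Xv :=
  match i with
  | inl (inl V) => ((fun j : Xv => match j with inl W => if W == V then -1 else 0 | inr _ => 0 end), 0)
  | inl (inr x) => ((fun j : Xv => match j with inl W => if in_calL W && (x \in W) then 1 else 0 | inr _ => 0 end), phi x)
  | inr (inl (inl x)) => ((fun j : Xv => match j with inl W => if in_calL W && (x \in W) then -1 else 0 | inr _ => 0 end), - phi x)
  | inr (inl (inr V)) => ((fun j : Xv => match j with inl _ => 0 | inr y => if in_calL V && (y \in V) then 1 else 0 end), if in_calL V then g V else 0)
  | inr (inr _) => ((fun j : Xv => match j with inl W => if in_calL W then g W else 0 | inr y => - phi y end), 0)
  end.

Lemma sumXv (f : Xv -> R) : \sum_(j in [set: Xv]) f j = \sum_W f (inl W) + \sum_y f (inr y).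
Proof. by rewrite (eq_bigl predT) ?big_sumType // => j; rewrite inE. Qed.

Lemma sum_unit (f : unit -> R) : \sum_i f i = f tt.
Proof. by rewrite (big_pred1 tt) // => -[]. Qed.

Lemma sumIx (f : Ix -> R) : \sum_i f i =
  \sum_V f (inl (inl V)) + \sum_x f (inl (inr x)) +
  (\sum_x f (inr (inl (inl x))) + \sum_V f (inr (inl (inr V))) + f (inr (inr tt))).
Proof. by rewrite !big_sumType sum_unit. Qed.

Lemma sum_delta (I : finType) (f : I -> R) a c :
  \sum_i f i * (if a == i then c else 0) = f a * c.
Proof.
rewrite (bigD1 a) //= eqxx big1 ?addr0 // => i hi.
by rewrite eq_sym (negbTE hi) mulr0.
Qed.

Lemma sum_ifr (I : finType) (P : pred I) (f : I -> R) c :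
  \sum_i f i * (if P i then c else 0) = c * \sum_(i | P i) f i.
Proof.
rewrite big_distrr [RHS]big_mkcond; apply: eq_bigr => i _.
by case: (P i); rewrite ?mulr0 // mulrC.
Qed.

Lemma sum_ifl (I : finType) (P : pred I) (f c : I -> R) :
  \sum_i (if P i then c i else 0) * f i = \sum_(i | P i) c i * f i.
Proof.
rewrite [RHS]big_mkcond; apply: eq_bigr => i _.
by case: (P i); rewrite ?mul0r.
Qed.

Lemma sum_ifl1 (I : finType) (P : pred I) (f : I -> R) c :
  \sum_i (if P i then c else 0) * f i = c * \sum_(i | P i) f i.
Proof.
rewrite sum_ifl big_distrr.
by apply: eq_bigr.
Qed.

End Main.

Unset Implicit Arguments. Set Strict Implicit.

Theorem theorem3p6 (d : Order.disp_t) (T : finLatticeType d) (R : realType)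
    (phi : T -> R) (hphi : M_1 phi) (g : {set T} -> R) :
  exists v : R,
    ((exists Phi, B_feasible phi Phi /\ Phi_app Phi g = v) /\
     (forall Phi, B_feasible phi Phi -> v <= Phi_app Phi g)) /\
    ((exists r : T -> R, S_feasible g r /\ S_obj phi r = v) /\
     (forall r : T -> R, S_feasible g r -> S_obj phi r <= v)).
Proof.
have [F0 [hF0 hF0m]] := primal_feas hphi.
have := @farkas_n R (Xv T) _ [set: Xv T] erefl (Ix T) (cs phi g).
case=> [[z hz]|[a [b [hc [ha hb]]]]].
- pose F V := z (inl V); pose r x := z (inr x).
  have sum0 : forall (I : finType) (f : I -> R), \sum_i 0 * f i = 0.
    by move=> I f; rewrite big1 // => i _; rewrite mul0r.
  have h1 : forall V, 0 <= F V.
    move=> V; have := hz (inl (inl V)); rewrite sumXv /= sum0 addr0.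
    by rewrite sum_ifl1 big_pred1_eq mulN1r oppr_le0.
  have h2 : forall x, phi x = \sum_(V | in_calL V && (x \in V)) F V.
    move=> x; apply/eqP; rewrite eq_le.
    have := hz (inl (inr x)); rewrite sumXv /= sum0 addr0 sum_ifl1 mul1r => ->.
    have := hz (inr (inl (inl x))); rewrite sumXv /= sum0 addr0 sum_ifl1 mulN1r lerN2 => ->.
    by [].
  have h4 : forall V, in_calL V -> \sum_(x in V) r x <= g V.
    move=> V hV; have := hz (inr (inl (inr V))); rewrite sumXv /= sum0 add0r hV /=.
    by rewrite sum_ifl1 mul1r.
  have h5 : \sum_(V | in_calL V) F V * g V <= \sum_x r x * phi x.
    have := hz (inr (inr tt)); rewrite sumXv /= sum_ifl.
    have -> : \sum_(W | in_calL W) g W * z (inl W) = \sum_(V | in_calL V) F V * g V.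
      by apply: eq_bigr => V _; rewrite mulrC.
    have -> : \sum_y - phi y * z (inr y) = - \sum_x r x * phi x.
      by rewrite -sumrN; apply: eq_bigr => y _; rewrite mulNr mulrC.
    move=> h; lra.
  pose Phi (W : {set T}) := \sum_(V | in_calL V && (W \subset V)) F V.
  have hPhi : forall W, in_calL W -> Phi W = \sum_(V | in_calL V && (W \subset V)) F V by [].
  have hmob := mob_of hPhi.
  have h1' : forall V, in_calL V -> 0 <= F V by move=> V _; apply: h1.
  have hwd := wd h1' h2 h4.
  have hPappl : Phi_app Phi g = \sum_(V | in_calL V) F V * g V.
    by apply: eq_bigr => V hV; rewrite hmob.
  have hBf : B_feasible phi Phi.
    split.
      move=> s W hs hW; rewrite (nablas_sum hPhi) //.
      by apply: sumr_ge0 => V _; apply: h1.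
    by move=> x; rewrite /Pi (Pi_sum _ hPhi) h2.
  have heq : \sum_x r x * phi x = \sum_(V | in_calL V) F V * g V.
    by apply/le_anti; rewrite hwd h5.
  exists (\sum_(V | in_calL V) F V * g V); split; split.
  + by exists Phi.
  + move=> Phi' [hM hPi]; rewrite -heq.
    apply: wd => //.
    * by move=> V hV; apply: mob_ge0.
    * by move=> x; rewrite -hPi /Pi (Pi_sum _ (fun W hW => mob_sum Phi' hW)).
  + by exists r; split.
  + move=> r' hr'; exact: wd h1' h2 hr'.
- exfalso; have [l [hl [hla hlb]]] := cone_mult hc; simpl in hla, hlb.
  have sum0r : forall (I : finType) (f : I -> R), \sum_i f i * 0 = 0.
    by move=> I f; rewrite big1 // => i _; rewrite mulr0.
  pose mu V := l (inl (inl V)); pose al x := l (inl (inr x)).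
  pose be x := l (inr (inl (inl x))); pose nu V := l (inr (inl (inr V))).
  pose ta := l (inr (inr tt)).
  pose rho x := be x - al x.
  have E1 : forall W, in_calL W -> \sum_(x in W) rho x = ta * g W - mu W.
    move=> W hW; have := hla (inl W); rewrite ha ?inE // sumIx /=.
    rewrite sum_delta hW /= !sum_ifr sum0r /rho sumrB.
    rewrite -/(mu W) -/ta.
    have -> : \sum_(i in W) l (inl (inr i)) = \sum_(x in W) al x by [].
    have -> : \sum_(i in W) l (inr (inl (inl i))) = \sum_(x in W) be x by [].
    move=> e; lra.
  have E2 : forall y, \sum_(V | in_calL V && (y \in V)) nu V = ta * phi y.
    move=> y; have := hla (inr y); rewrite ha ?inE // sumIx /=.
    rewrite !sum0r sum_ifr mul1r -/ta.
    have -> : \sum_(i | in_calL i && (y \in i)) l (inr (inl (inr i))) = \sum_(V | in_calL V && (y \in V)) nu V by [].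
    move=> e; lra.
  have E3 : b = - \sum_x rho x * phi x + \sum_(V | in_calL V) nu V * g V.
    rewrite hlb sumIx /= !sum0r.
    have -> : \sum_i l (inr (inl (inr i))) * (if in_calL i then g i else 0) = \sum_(V | in_calL V) nu V * g V.
      by rewrite [RHS]big_mkcond; apply: eq_bigr => V _; case: (in_calL V); rewrite ?mulr0.
    have -> : \sum_i l (inr (inl (inl i))) * - phi i = - \sum_x be x * phi x.
      by rewrite -sumrN; apply: eq_bigr => x _; rewrite mulrN.
    have -> : \sum_x rho x * phi x = \sum_x be x * phi x - \sum_x al x * phi x.
      by rewrite -sumrB; apply: eq_bigr => x _; rewrite mulrBl.
    rewrite -/ta mulr0; lra.
  have hta : 0 <= ta by apply: hl.
  have [htp|ht0] : 0 < ta \/ ta = 0.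
    by move: hta; rewrite le_eqVlt => /orP[/eqP ->|->]; [right|left].
  + have hw := @wd _ _ _ (fun x => ta * phi x) (fun V => ta * g V) nu rho
      (fun V _ => hl _) (fun x => esym (E2 x)).
    have : \sum_x rho x * (ta * phi x) <= \sum_(V | in_calL V) nu V * (ta * g V).
      apply: hw => V hV; rewrite E1 //; have := hl (inl (inl V)); rewrite -/(mu V) => h; lra.
    have -> : \sum_x rho x * (ta * phi x) = ta * \sum_x rho x * phi x.
      by rewrite big_distrr; apply: eq_bigr => x _; rewrite mulrCA.
    have -> : \sum_(V | in_calL V) nu V * (ta * g V) = ta * \sum_(V | in_calL V) nu V * g V.
      by rewrite big_distrr; apply: eq_bigr => x _; rewrite mulrCA.
    rewrite ler_pM2l // => h; lra.
  + have hnu : \sum_(V | in_calL V) nu V * g V = 0.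
      apply: big1 => V hV.
      have := hV; move=> /andP[_ /set0Pn[y hy]].
      have := E2 y; rewrite ht0 mul0r => e.
      by rewrite (psumr_eq0P _ e) ?mul0r // ?hV ?hy // => U _; apply: hl.
    have hw := @wd _ _ _ phi (fun _ => 0) F0 rho hF0 hF0m.
    have : \sum_x rho x * phi x <= \sum_(V | in_calL V) F0 V * 0.
      apply: hw => V hV; rewrite E1 // ht0 mul0r sub0r oppr_le0; exact: hl.
    have -> : \sum_(V | in_calL V) F0 V * 0 = 0 by rewrite big1 // => V _; rewrite mulr0.
    move=> h; lra.
Qed.
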